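(* Let $\psi\in[0,2\pi)$ and consider, for $\kappa\in\mathbb{R}$, the equation $$\cos(\kappa\cos\psi)+\cos\!\Big(\tfrac{\kappa}{2}\cos\psi+\tfrac{\sqrt3\kappa}{2}\sin\psi\Big)+\cos\!\Big(\tfrac{\kappa}{2}\cos\psi-\tfrac{\sqrt3\kappa}{2}\sin\psi\Big)-3=0. \qquad (\ast\ast)$$ Then $(\ast\ast)$ has a real solution $\kappa\neq0$ if and only if $(\sqrt3\tan\psi-1)/2\in\mathbb{Q}_\infty$. In that case one can write $$\cos\psi=\frac{\sqrt3}{2}\frac{m_1}{\sqrt{m_1^2+m_1m_2+m_2^2}},\qquad \sin\psi=\frac12\frac{m_1+2m_2}{\sqrt{m_1^2+m_1m_2+m_2^2}}$$ with $(m_1,m_2)\in\mathbb{Z}^2\setminus\{(0,0)\}$, $\gcd(|m_1|,|m_2|)=1$, and the set of real solutions of $(\ast\ast)$ is exactly $$\Big\{\tfrac{4M\pi}{\sqrt3}\sqrt{m_1^2+m_1m_2+m_2^2} : M\in\mathbb{Z}\Big\}.$$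
   Context: $\mathbb{Q}_\infty := \mathbb{Q}\cup\{\pm\infty\}$, with the conventions $\tan(\pm\pi/2)=\pm\infty$ and $(\sqrt3\cdot(\pm\infty)-1)/2=\pm\infty$. *)

(* Defs.v *)
From Stdlib Require Import Reals ZArith QArith Qreals.
Open Scope R_scope.

Definition eqLHS (psi kappa : R) : R :=
  cos (kappa * cos psi)
  + cos (kappa / 2 * cos psi + sqrt 3 * kappa / 2 * sin psi)
  + cos (kappa / 2 * cos psi - sqrt 3 * kappa / 2 * sin psi)
  - 3.

(* (sqrt 3 * tan psi - 1)/2 lies in Q_infty = Q ∪ {±∞}.  With the conventions
   tan(±π/2) = ±∞, the value is ±∞ exactly when cos psi = 0. *)
Definition in_Qinf_tan (psi : R) : Prop :=
  cos psi = 0 \/ exists q : Q, (sqrt 3 * tan psi - 1) / 2 = Q2R q.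

(* Main.v *)
Require Import Defs.
From Stdlib Require Import Reals ZArith QArith Qreals.
From Stdlib Require Import Lra Lia Psatz.
Open Scope R_scope.

Lemma s3_prop : sqrt 3 * sqrt 3 = 3 /\ 0 < sqrt 3.
Proof. split. apply sqrt_sqrt; lra. apply sqrt_lt_R0; lra. Qed.

Lemma cos1 x : cos x = 1 -> exists k : Z, x = 2 * PI * IZR k.
Proof.
  intro H. assert (Hx : x = 2 * (x/2)) by field.
  rewrite Hx, cos_2a_sin in H.
  assert (sin (x/2) = 0) by nra.
  destruct (sin_eq_0_0 _ H0) as [k Hk]. exists k. lra.
Qed.

Lemma cos2pi k : cos (2 * PI * IZR k) = 1.
Proof.
  replace (2 * PI * IZR k) with (2 * (IZR k * PI)) by ring.
  rewrite cos_2a_sin, sin_eq_0_1 by (exists k; ring). ring.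
Qed.

Lemma eqLHS_iff psi kappa : eqLHS psi kappa = 0 <->
  exists a b c : Z, kappa * cos psi = 2 * PI * IZR a /\
   kappa / 2 * cos psi + sqrt 3 * kappa / 2 * sin psi = 2 * PI * IZR b /\
   kappa / 2 * cos psi - sqrt 3 * kappa / 2 * sin psi = 2 * PI * IZR c.
Proof.
  unfold eqLHS. split.
  - intro H.
    pose proof (COS_bound (kappa * cos psi)).
    pose proof (COS_bound (kappa / 2 * cos psi + sqrt 3 * kappa / 2 * sin psi)).
    pose proof (COS_bound (kappa / 2 * cos psi - sqrt 3 * kappa / 2 * sin psi)).
    destruct (cos1 (kappa * cos psi)) as [a Ha]; [lra|].
    destruct (cos1 (kappa / 2 * cos psi + sqrt 3 * kappa / 2 * sin psi)) as [b Hb]; [lra|].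
    destruct (cos1 (kappa / 2 * cos psi - sqrt 3 * kappa / 2 * sin psi)) as [c Hc]; [lra|].
    exists a, b, c; auto.
  - intros [a [b [c [Ha [Hb Hc]]]]]. rewrite Ha, Hb, Hc, !cos2pi. ring.
Qed.

Lemma dir (c s x y lam : R) : c^2 + s^2 = 1 -> 0 < lam ->
  c = lam * sqrt 3 * x / 2 -> s = lam * (x + 2 * y) / 2 ->
  c = sqrt 3 / 2 * (x / sqrt (x^2 + x*y + y^2)) /\
  s = 1 / 2 * ((x + 2 * y) / sqrt (x^2 + x*y + y^2)).
Proof.
  intros H1 Hl Hc Hs. destruct s3_prop as [S3 S3p].
  set (N := x^2 + x*y + y^2).
  assert (HN : lam^2 * N = 1).
  { rewrite Hc, Hs in H1. unfold N. nra. }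
  assert (HN0 : 0 < N) by nra.
  assert (Hr : sqrt N * sqrt N = N) by (apply sqrt_sqrt; lra).
  assert (Hr0 : 0 < sqrt N) by (apply sqrt_lt_R0; lra).
  assert (Hrl : sqrt N * lam = 1).
  { assert ((sqrt N * lam)^2 = 1).
    { replace ((sqrt N * lam)^2) with ((sqrt N * sqrt N) * lam^2) by ring.
      rewrite Hr. lra. }
    assert (0 < sqrt N * lam) by (apply Rmult_lt_0_compat; lra).
    set (u := sqrt N * lam) in *.
    assert ((u - 1) * (u + 1) = 0) by (simpl in *; lra).
    apply Rmult_integral in H2. lra. }
  assert (E : forall z, z / sqrt N = z * lam).
  { assert (Hi : / sqrt N = lam) by (rewrite <- (Rmult_1_l (/ sqrt N)), <- Hrl; field; lra).
    intro z. unfold Rdiv. rewrite Hi. ring. }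
  rewrite !E. split; lra.
Qed.

Lemma ex1 psi : in_Qinf_tan psi -> exists m1 m2 : Z, (m1, m2) <> (0%Z, 0%Z) /\
  exists lam, 0 < lam /\ cos psi = lam * sqrt 3 * IZR m1 / 2 /\
    sin psi = lam * (IZR m1 + 2 * IZR m2) / 2.
Proof.
  destruct s3_prop as [S3 S3p]. pose proof (sin2_cos2 psi) as SC.
  unfold Rsqr in SC.
  intro H. destruct (Req_dec (cos psi) 0) as [H0|Hc].
  - assert (sin psi = 1 \/ sin psi = -1) as [Hs|Hs] by (rewrite H0 in SC; nra).
    + exists 0%Z, 1%Z. split; [congruence|]. exists 1. rewrite H0, Hs. simpl. lra.
    + exists 0%Z, (-1)%Z. split; [congruence|]. exists 1. rewrite H0, Hs. simpl. lra.
  - destruct H as [H0|[q Hq]]; [contradiction|].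
    destruct q as [n d]. unfold Q2R in Hq; simpl in Hq.
    unfold tan in Hq.
    assert (HD : 0 < IZR (Z.pos d)) by (apply IZR_lt; lia).
    assert (Key : sqrt 3 * sin psi * IZR (Z.pos d) = cos psi * IZR (2 * n + Z.pos d)).
    { rewrite plus_IZR, mult_IZR.
      assert (E : sqrt 3 * (sin psi / cos psi) = 2 * (IZR n * / IZR (Z.pos d)) + 1) by lra.
      replace (sin psi) with ((sin psi / cos psi) * cos psi) by (field; lra).
      replace (sqrt 3 * (sin psi / cos psi * cos psi) * IZR (Z.pos d)) with
        (sqrt 3 * (sin psi / cos psi) * cos psi * IZR (Z.pos d)) by ring.
      rewrite E. field. lra. }
    destruct (Rlt_or_le 0 (cos psi)) as [Hp|Hn].
    + exists (2 * Z.pos d)%Z, (2 * n + Z.pos d - Z.pos d)%Z. split; [intro E; inversion E|].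
      exists (cos psi / (sqrt 3 * IZR (Z.pos d))). split.
      { apply Rdiv_lt_0_compat; [lra| apply Rmult_lt_0_compat; lra]. }
      rewrite minus_IZR, !mult_IZR. rewrite plus_IZR, mult_IZR in Key. split.
      * field. lra.
      * apply (Rmult_eq_reg_r (sqrt 3 * IZR (Z.pos d))); [|apply Rmult_integral_contrapositive; lra].
        field_simplify; try lra. rewrite plus_IZR, mult_IZR. lra.
    + exists (- (2 * Z.pos d))%Z, (- (2 * n + Z.pos d - Z.pos d))%Z. split; [intro E; inversion E|].
      exists (- cos psi / (sqrt 3 * IZR (Z.pos d))). split.
      { apply Rdiv_lt_0_compat; [lra| apply Rmult_lt_0_compat; lra]. }
      rewrite !opp_IZR, minus_IZR, !mult_IZR. rewrite plus_IZR, mult_IZR in Key. split.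
      * field. lra.
      * apply (Rmult_eq_reg_r (sqrt 3 * IZR (Z.pos d))); [|apply Rmult_integral_contrapositive; lra].
        field_simplify; try lra. rewrite ?plus_IZR, ?mult_IZR. lra.
Qed.

Lemma ex2 psi : in_Qinf_tan psi -> exists m1 m2 : Z,
  (m1, m2) <> (0%Z, 0%Z) /\ Z.gcd (Z.abs m1) (Z.abs m2) = 1%Z /\
  cos psi = sqrt 3 / 2 * (IZR m1 / sqrt (IZR m1 ^ 2 + IZR m1 * IZR m2 + IZR m2 ^ 2)) /\
  sin psi = 1 / 2 * ((IZR m1 + 2 * IZR m2) / sqrt (IZR m1 ^ 2 + IZR m1 * IZR m2 + IZR m2 ^ 2)).
Proof.
  intro H. destruct (ex1 psi H) as [a [b [Hab [lam [Hl [Hc Hs]]]]]].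
  set (g := Z.gcd a b).
  assert (Hg0 : (0 <= g)%Z) by apply Z.gcd_nonneg.
  assert (Hg : g <> 0%Z).
  { intro E. apply Z.gcd_eq_0 in E. destruct E; subst; congruence. }
  destruct (Z.gcd_divide_l a b) as [k1 Hk1].
  destruct (Z.gcd_divide_r a b) as [k2 Hk2].
  fold g in Hk1, Hk2.
  assert (Hgcd : Z.gcd k1 k2 = 1%Z).
  { assert (E : g = (Z.gcd k1 k2 * Z.abs g)%Z).
    { rewrite <- Z.gcd_mul_mono_r, <- Hk1, <- Hk2. reflexivity. }
    rewrite Z.abs_eq in E by lia. nia. }
  clearbody g. exists k1, k2. split; [|split].
  - intro E. injection E as E1 E2. apply Hab. rewrite Hk1, Hk2, E1, E2. reflexivity.
  - rewrite Z.gcd_abs_l, Z.gcd_abs_r. exact Hgcd.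
  - apply (dir (cos psi) (sin psi) (IZR k1) (IZR k2) (lam * IZR g)).
    + pose proof (sin2_cos2 psi). unfold Rsqr in *. lra.
    + apply Rmult_lt_0_compat; [lra| apply IZR_lt; lia].
    + rewrite Hc, Hk1, mult_IZR. field.
    + rewrite Hs, Hk1, Hk2, !mult_IZR. field.
Qed.

Lemma solset psi m1 m2 :
  Z.gcd (Z.abs m1) (Z.abs m2) = 1%Z ->
  cos psi = sqrt 3 / 2 * (IZR m1 / sqrt (IZR m1 ^ 2 + IZR m1 * IZR m2 + IZR m2 ^ 2)) ->
  sin psi = 1 / 2 * ((IZR m1 + 2 * IZR m2) / sqrt (IZR m1 ^ 2 + IZR m1 * IZR m2 + IZR m2 ^ 2)) ->
  forall kappa : R, eqLHS psi kappa = 0 <->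
   exists M : Z, kappa = 4 * IZR M * PI / sqrt 3 * sqrt (IZR m1 ^ 2 + IZR m1 * IZR m2 + IZR m2 ^ 2).
Proof.
  intros Hg Hc Hs kappa.
  destruct s3_prop as [S3 S3p]. pose proof PI_RGT_0 as HPI.
  set (r := sqrt (IZR m1 ^ 2 + IZR m1 * IZR m2 + IZR m2 ^ 2)) in *.
  assert (Hr0 : 0 <= r) by apply sqrt_pos.
  assert (Hr : 0 < r).
  { destruct (Req_dec r 0) as [E|E]; [|lra].
    pose proof (sin2_cos2 psi). unfold Rsqr in *. rewrite Hc, Hs, E in H.
    unfold Rdiv in H. rewrite Rinv_0 in H. lra. }
  clearbody r.
  rewrite eqLHS_iff. split.
  - intros [a [b [c [Ha [Hb Hcc]]]]].
    assert (I1 : kappa * sqrt 3 * IZR m1 = 2 * r * (kappa * cos psi)) by (rewrite Hc; field; lra).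
    assert (I3 : kappa * sqrt 3 * IZR m2 =
       -2 * r * (kappa / 2 * cos psi - sqrt 3 * kappa / 2 * sin psi)) by (rewrite Hc, Hs; field; lra).
    rewrite Ha in I1. rewrite Hcc in I3.
    rewrite Z.gcd_abs_l, Z.gcd_abs_r in Hg.
    destruct (Z.gcd_bezout _ _ _ Hg) as [u [v Huv]].
    apply (f_equal IZR) in Huv. rewrite plus_IZR, !mult_IZR in Huv.
    exists (u * a - v * c)%Z. rewrite minus_IZR, !mult_IZR.
    apply (Rmult_eq_reg_r (sqrt 3)); [|lra].
    replace (kappa * sqrt 3) with (kappa * sqrt 3 * (IZR u * IZR m1 + IZR v * IZR m2)) by (rewrite Huv; ring).
    replace (kappa * sqrt 3 * (IZR u * IZR m1 + IZR v * IZR m2)) with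
      (IZR u * (kappa * sqrt 3 * IZR m1) + IZR v * (kappa * sqrt 3 * IZR m2)) by ring.
    rewrite I1, I3. field. lra.
  - intros [M HM].
    exists (M * m1)%Z, (M * (m1 + m2))%Z, (- (M * m2))%Z.
    rewrite opp_IZR, !mult_IZR, plus_IZR, HM, Hc, Hs.
    repeat split; field; lra.
Qed.

Lemma Q2R_inj z : Q2R (inject_Z z) = IZR z.
Proof. unfold Q2R, inject_Z. simpl. rewrite Rinv_1. ring. Qed.

Theorem mainTheorem6 (psi : R) (Hpsi0 : 0 <= psi) (Hpsi1 : psi < 2 * PI) :
  ((exists kappa : R, kappa <> 0 /\ eqLHS psi kappa = 0) <-> in_Qinf_tan psi)
  /\
  (in_Qinf_tan psi ->
   exists m1 m2 : Z,
     (m1, m2) <> (0%Z, 0%Z) /\ Z.gcd (Z.abs m1) (Z.abs m2) = 1%Z /\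
     let N := IZR m1 ^ 2 + IZR m1 * IZR m2 + IZR m2 ^ 2 in
     cos psi = sqrt 3 / 2 * (IZR m1 / sqrt N) /\
     sin psi = 1 / 2 * ((IZR m1 + 2 * IZR m2) / sqrt N) /\
     (forall kappa : R, eqLHS psi kappa = 0 <->
        exists M : Z, kappa = 4 * IZR M * PI / sqrt 3 * sqrt N)).
Proof.
  destruct s3_prop as [S3 S3p]. pose proof PI_RGT_0 as HPI.
  assert (P2 : in_Qinf_tan psi ->
   exists m1 m2 : Z,
     (m1, m2) <> (0%Z, 0%Z) /\ Z.gcd (Z.abs m1) (Z.abs m2) = 1%Z /\
     let N := IZR m1 ^ 2 + IZR m1 * IZR m2 + IZR m2 ^ 2 in
     cos psi = sqrt 3 / 2 * (IZR m1 / sqrt N) /\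
     sin psi = 1 / 2 * ((IZR m1 + 2 * IZR m2) / sqrt N) /\
     (forall kappa : R, eqLHS psi kappa = 0 <->
        exists M : Z, kappa = 4 * IZR M * PI / sqrt 3 * sqrt N)).
  { intro H. destruct (ex2 psi H) as [m1 [m2 [Hnz [Hg [Hc Hs]]]]].
    exists m1, m2. split; [exact Hnz|]. split; [exact Hg|]. cbv zeta.
    split; [exact Hc|]. split; [exact Hs|]. apply solset; assumption. }
  split; [|exact P2]. split.
  - intros [kappa [Hk H]]. apply eqLHS_iff in H.
    destruct H as [a [b [c [Ha [Hb Hcc]]]]].
    destruct (Req_dec (cos psi) 0) as [H0|Hc0]; [left; exact H0|right].
    assert (Ha0 : a <> 0%Z).
    { intro E. rewrite E in Ha. simpl in Ha.
      assert (kappa * cos psi <> 0) by (apply Rmult_integral_contrapositive; lra). lra. }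
    assert (Ha0' : IZR a <> 0) by (apply not_0_IZR; exact Ha0).
    exists (inject_Z (b - c - a) / inject_Z (2 * a))%Q.
    rewrite Q2R_div.
    2:{ intro E. unfold Qeq in E. cbn [Qnum Qden inject_Z] in E. lia. }
    rewrite !Q2R_inj, minus_IZR, minus_IZR, mult_IZR.
    assert (T : sqrt 3 * tan psi = IZR (b - c) / IZR a).
    { unfold tan. rewrite minus_IZR.
      replace (sqrt 3 * (sin psi / cos psi)) with ((sqrt 3 * kappa * sin psi) / (kappa * cos psi))
        by (field; lra).
      replace (sqrt 3 * kappa * sin psi) with (2 * PI * IZR b - 2 * PI * IZR c) by lra.
      rewrite Ha. field. lra. }
    rewrite T, minus_IZR. field. lra.
  - intro H. destruct (P2 H) as [m1 [m2 [_ [_ [Hc [Hs Hsol]]]]]].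
    exists (4 * IZR 1 * PI / sqrt 3 * sqrt (IZR m1 ^ 2 + IZR m1 * IZR m2 + IZR m2 ^ 2)).
    split.
    + assert (Hr : 0 < sqrt (IZR m1 ^ 2 + IZR m1 * IZR m2 + IZR m2 ^ 2)).
      { destruct (Req_dec (sqrt (IZR m1 ^ 2 + IZR m1 * IZR m2 + IZR m2 ^ 2)) 0) as [E|E].
        - pose proof (sin2_cos2 psi). unfold Rsqr in *. rewrite Hc, Hs, E in H0.
          unfold Rdiv in H0. rewrite Rinv_0 in H0. lra.
        - pose proof (sqrt_pos (IZR m1 ^ 2 + IZR m1 * IZR m2 + IZR m2 ^ 2)). lra. }
      apply Rmult_integral_contrapositive. split; [|lra].
      unfold Rdiv. apply Rmult_integral_contrapositive. split.
      * simpl. lra.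
      * apply Rinv_neq_0_compat. lra.
    + apply Hsol. exists 1%Z. reflexivity.
Qed.
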